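(* In the infinite-sites model described in the context, for every generation $\tau\ge 0$ the expected phenotypic mean and expected phenotypic variance satisfy \[ \bar G(\tau)=\Theta\int_0^\infty \alpha f(\alpha)\int_0^\tau\bigl(1-P_{\mathrm{lost}}([t],e^{s\alpha})\bigr)\,\gamma_1\bigl(a(t,e^{s\alpha},N)\bigr)\,dt\,d\alpha \] and \[ V_G(\tau)=\Theta\int_0^\infty \alpha^2 f(\alpha)\int_0^\tau\bigl(1-P_{\mathrm{lost}}([t],e^{s\alpha})\bigr)\,\gamma\bigl(a(t,e^{s\alpha},N)\bigr)\,dt\,d\alpha . \] In particular, $\Theta$ enters both quantities only as a multiplicative factor.
   Context: A haploid population of size $N$ starts monomorphic at generation $\tau=0$. For $\tau>0$, mutations occur at new sites (infinite sites) according to a Poisson process with rate $\Theta>0$ per generation, so the number of mutations in $(0,\tau]$ is Poisson with mean $\Theta\tau$; write $\mathrm{Poi}_{\Theta\tau}(n)=e^{-\Theta\tau}(\Theta\tau)^n/n!$. Each mutation has trait effect $\alpha>0$ drawn independently from a probability density $f$ on $(0,\infty)$ with finite moments, and fitness $\sigma=e^{s\alpha}$ with $s>0$. Sites are in linkage equilibrium (frequencies at different sites independent). For $\sigma>1$, consider a Galton–Watson process started from one individual with offspring mean $\sigma$; $P_{\mathrm{lost}}(n,\sigma)$ is the probability it is extinct by generation $n$ ($P_{\mathrm{lost}}(0,\sigma)=0$). $[t]$ is the integer part of $t$. $E_1(a)=\int_a^\infty x^{-1}e^{-x}dx$. For $a>0$, $g_a(x)=a(1-x)^{-2}\exp(-ax/(1-x))$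 on $[0,1)$, with $\gamma_1(a)=\int_0^1 x g_a(x)dx=1-ae^aE_1(a)$ and $\gamma(a)=\int_0^1x(1-x)g_a(x)dx=a(1+a)e^aE_1(a)-a$. Set $a(t,\sigma,N)=N(1-P_{\mathrm{lost}}([t],\sigma))\sigma^{-t}$. Given $n$ mutations in $(0,\tau]$ (arrival times distributed as a Poisson process conditioned on $n$ events), the $i$-th mutation, with effect $\alpha_i$ and arrival time $\tau_i$, has frequency $\tilde X^{(i)}_{\tau,e^{s\alpha_i},\Theta}$ in generation $\tau$, a random variable equal to $0$ with probability $P_{\mathrm{lost}}([\tau-\tau_i],e^{s\alpha_i})$ and otherwise having density $g_{a(\tau-\tau_i,e^{s\alpha_i},N)}$. The expected phenotypic mean and variance are defined by $\bar G(\tau)=\sum_{n\ge1}\mathrm{Poi}_{\Theta\tau}(n)\sum_{i=1}^n\int_0^\infty\alpha_i\,\mathbb E[\tilde X^{(i)}_{\tau,e^{s\alpha_i},\Theta}]f(\alpha_i)d\alpha_i$ and $V_G(\tau)=\sum_{n\ge1}\mathrm{Poi}_{\Theta\tau}(n)\sum_{i=1}^n\int_0^\infty\alpha_i^2\,\mathbb E[\tilde X^{(i)}_{\tau,e^{s\alpha_i},\Theta}(1-\tilde X^{(i)}_{\tau,e^{s\alpha_i},\Theta})]f(\alpha_i)d\alpha_i$. *)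

(* Defs.v *)
From HB Require Import structures.
From mathcomp Require Import all_boot all_order all_algebra.
From mathcomp Require Import all_classical all_reals all_analysis.
Set Implicit Arguments. Unset Strict Implicit. Unset Printing Implicit Defensive.
Import Order.TTheory GRing.Theory Num.Theory.
Import numFieldNormedType.Exports.
Local Open Scope classical_set_scope.
Local Open Scope ring_scope.

Section Model.
Variable R : realType.
Local Notation mu := (@lebesgue_measure R).

Definition offspring_law (p : nat -> R) (m : R) : Prop :=
  (forall k, 0 <= p k) /\
  series p @ \oo --> (1 : R) /\
  series (fun k => k%:R * p k) @ \oo --> (m : R).

Definition pgf (p : nat -> R) (x : R) : R := limn (series (fun k => p k * x ^+ k)).

(* Galton-Watson process started from one individual with offspring law
   off sigma (of mean sigma): probability of extinction by generation n,
   q_0 = 0, q_{n+1} = pgf(q_n). *)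
Definition Plost (off : R -> nat -> R) (n : nat) (sigma : R) : R :=
  iter n (pgf (off sigma)) 0.

Definition ipart (t : R) : nat := Num.truncn t.

Definition g (a x : R) : R := a * (1 - x) ^- 2 * expR (- (a * x / (1 - x))).

Definition gamma1 (a : R) : \bar R :=
  (\int[mu]_(x in [set x : R | (0 <= x < 1)%R]) (x * g a x)%:E)%E.
Definition gamma (a : R) : \bar R :=
  (\int[mu]_(x in [set x : R | (0 <= x < 1)%R]) (x * (1 - x) * g a x)%:E)%E.

Definition aa (off : R -> nat -> R) (t sigma : R) (N : nat) : R :=
  N%:R * (1 - Plost off (ipart t) sigma) * sigma `^ (- t).

Definition Poi (lam : R) (n : nat) : R := expR (- lam) * lam ^+ n / n`!%:R.

(* E[h(X)] for the frequency X in generation tau of a mutation with fitness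
   sigma that arose at time u: X = 0 with probability P_lost([tau-u],sigma),
   otherwise X has density g_{a(tau-u,sigma,N)}. *)
Definition EhX_given (off : R -> nat -> R) (N : nat) (h : R -> R)
    (tau sigma u : R) : \bar R :=
  ((Plost off (ipart (tau - u)) sigma * h 0)%:E +
   (1 - Plost off (ipart (tau - u)) sigma)%:E *
     \int[mu]_(x in [set x : R | (0 <= x < 1)%R])
        (h x * g (aa off (tau - u) sigma N) x)%:E)%E.

(* E[h(X^(i))] where, given n mutations in (0,tau], the arrival time tau_i of
   (a label-uniformly chosen) mutation i is uniform on (0,tau]. *)
Definition EhX (off : R -> nat -> R) (N : nat) (h : R -> R)
    (tau sigma : R) : \bar R :=
  ((tau^-1)%:E *
   \int[mu]_(u in [set u : R | (0 < u <= tau)%R]) EhX_given off N h tau sigma u)%E.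

Definition moment_sum (off : R -> nat -> R) (N : nat) (Theta s : R)
    (f : R -> R) (k : nat) (h : R -> R) (tau : R) : \bar R :=
  (\sum_(1 <= n <oo)
     (Poi (Theta * tau) n)%:E *
     \sum_(i < n)
       \int[mu]_(alpha in [set alpha : R | (0 < alpha)%R])
          ((alpha ^+ k)%:E * EhX off N h tau (expR (s * alpha)) * (f alpha)%:E))%E.

Definition Gbar off N Theta s f tau := moment_sum off N Theta s f 1 id tau.
Definition VG off N Theta s f tau :=
  moment_sum off N Theta s f 2 (fun x => x * (1 - x)) tau.

End Model.

(* Main.v *)
Require Import Defs.
From HB Require Import structures.
From mathcomp Require Import all_boot all_order all_algebra.
From mathcomp Require Import all_classical all_reals all_analysis.
Import Order.TTheory GRing.Theory Num.Theory.
Import numFieldNormedType.Exports.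
From mathcomp Require Import lra ring.
Local Open Scope classical_set_scope.
Local Open Scope ring_scope.


Lemma refl_measure (R : realType) (t : R) (A : set R) : measurable A ->
  @lebesgue_measure R ((fun u => t - u) @^-1` A) = lebesgue_measure A.
Proof.
move=> mA.
have mf : measurable_fun setT (fun u : R => t - u).
  exact: measurable_realfun.measurable_funB.
pose mu := @measure_function_pushforward__canonical__measure_function_Measure _ _ (measurableTypeR R) (measurableTypeR R) R (@lebesgue_measure R) (fun u => t - u) mf.
have := (@lebesgue_measure_unique R mu _ A mA).
rewrite /mu /= /pushforward => ->//.
move=> _ [[a b] _ <-] /=.
rewrite /mu /= /pushforward.
have -> : (fun u => t - u) @^-1` `]a, b] = `[t - b, t - a[%classic.
  apply/seteqP; split => u /=; rewrite !in_itv /= => /andP[h1 h2]; apply/andP; split; lra.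
rewrite !lebesgue_measure_itv /= !lte_fin.
have -> : (t - b < t - a) = (a < b) by apply/idP/idP; lra.
case: ifP => // _; rewrite -!EFinD; congr (_%:E); lra.
Qed.
Section compnnsfun.
Context (R : realType) (tau : R).
Import HBNNSimple.
Variable h : {nnsfun (measurableTypeR R) >-> R}.
Definition hrefl (u : measurableTypeR R) : R := h (tau - (u : R)).


Lemma hrefl_meas : measurable_fun setT hrefl.
Proof.
change (measurable_fun setT (h \o (fun u => tau - u))).
apply: measurableT_comp => //.
exact: measurable_realfun.measurable_funB.
Qed.
HB.instance Definition _ := isMeasurableFun.Build _ _ (measurableTypeR R) R hrefl hrefl_meas.
Lemma hrefl_fin : @FiniteImage (measurableTypeR R) R hrefl.
Proof.
split; apply: (sub_finite_set _ (fimfunP h)).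
by move=> y [x _ <-]; exists (tau - x).
Qed.
HB.instance Definition _ := hrefl_fin.
Lemma hrefl_nn : @isNonNegFun (measurableTypeR R) R hrefl.
Proof. by split => x /=; apply: fun_ge0. Qed.
HB.instance Definition _ := hrefl_nn.
Definition hrefl_nnsfun : {nnsfun (measurableTypeR R) >-> R} := hrefl.
End compnnsfun.
Arguments hrefl_nnsfun {R}.

Section nnI.
Local Open Scope ereal_scope.
Context (R : realType).
Local Notation mu := (@lebesgue_measure R).
Import HBNNSimple.

Definition nnI (F : measurableTypeR R -> \bar R) := ereal_sup [set sintegral mu h |
  h in [set h : {nnsfun (measurableTypeR R) >-> R} | forall x, (h x)%:E <= F x]].

Lemma integral_nnIE D F :
  \int[mu]_(x in D) F x = nnI ((F \_ D)^\+) - nnI ((F \_ D)^\-).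
Proof. reflexivity. Qed.

Lemma nnI_le F G : (forall h : {nnsfun (measurableTypeR R) >-> R}, (forall x, (h x)%:E <= F x) ->
  exists h' : {nnsfun (measurableTypeR R) >-> R}, (forall x, (h' x)%:E <= G x) /\
    sintegral mu h <= sintegral mu h') -> nnI F <= nnI G.
Proof.
move=> H; apply: ge_ereal_sup => _ [h hF <-].
have [h' [h'G le]] := H h hF.
by apply: le_trans le _; apply: ereal_sup_ubound; exists h'.
Qed.

Lemma sintegral_hrefl t (h : {nnsfun (measurableTypeR R) >-> R}) :
  sintegral mu (hrefl_nnsfun t h) = sintegral mu h.
Proof.
rewrite /sintegral; apply: eq_fsbigr => x _.
congr (_ * _).
have mx : measurable (h @^-1` [set x]) by exact: (measurable_sfunP h (measurable_set1 x)).

rewrite -(refl_measure _ t _ mx).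
by [].
Qed.

Lemma nnI_refl (t : R) (F : measurableTypeR R -> \bar R) :
  nnI (fun u : measurableTypeR R => F (t - (u : R))%R) = nnI F.
Proof.
apply/eqP; rewrite eq_le; apply/andP; split; apply: nnI_le => h hF.
  exists (hrefl_nnsfun t h); split; last by rewrite sintegral_hrefl.
  move=> x /=; rewrite /hrefl; have := hF (t - x)%R.
  by rewrite subKr.
exists (hrefl_nnsfun t h); split; last by rewrite sintegral_hrefl.
by move=> x /=; rewrite /hrefl; apply: hF.
Qed.

Lemma nnI_pt (p : R) (F G : measurableTypeR R -> \bar R) :
  (forall x, x != p -> F x = G x) -> (forall x, 0 <= G x) -> nnI F <= nnI G.
Proof.
move=> FG G0; apply: nnI_le => h hF.
have mC : measurable (setT `\ p : set (measurableTypeR R)).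
  by apply: measurableD => //; exact: measurable_set1.
exists (proj_nnsfun h mC); split.
  move=> x /=; rewrite measurable_realfun.mindicE.
  have [->|xp] := eqVneq x p.
    by rewrite /= (_ : (p \in _) = false) ?mulr0 //; apply/negbTE; rewrite notin_setE /=; case.
  rewrite (_ : (x \in _) = true) ?mulr1; first by rewrite -FG.
  by apply/mem_set; split => //= /eqP; rewrite (negbTE xp).
rewrite -mrestrict -integral_nnsfun // -integralT_nnsfun.
rewrite integral_setD1 //.
have mh := @measurable_funPT _ _ _ _ h.
apply/measurable_realfun.measurable_EFinP; apply: measurable_funTS; exact: mh.
Qed.

Lemma int_refl (t : R) (D : set R) (F : R -> \bar R) :
  \int[mu]_(u in D) F (t - u)%R = \int[mu]_(x in [set x | D (t - x)%R]) F x.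
Proof.
rewrite !integral_nnIE.
have E : (fun u => F (t - u)%R) \_ D =
    fun u : R => (F \_ [set x | D (t - x)%R]) (t - u)%R.
  apply/funext => u; rewrite /patch.
  have -> : ((t - u)%R \in [set x | D (t - x)%R]) = (u \in D).
    by apply/idP/idP; rewrite !in_setE /= subKr.
  by [].
rewrite E; congr (_ - _).
  rewrite -(nnI_refl t ((F \_ [set x | D (t - x)%R])^\+)).
  by congr nnI; apply/funext => u; rewrite !funeposE.
rewrite -(nnI_refl t ((F \_ [set x | D (t - x)%R])^\-)).
by congr nnI; apply/funext => u; rewrite !funenegE.
Qed.

Lemma int_pt (p : R) (D D' : set R) (F : R -> \bar R) :
  (forall x, x != p -> (D x <-> D' x)) ->
  \int[mu]_(x in D) F x = \int[mu]_(x in D') F x.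
Proof.
move=> DD; rewrite !integral_nnIE.
have E x : x != p -> (F \_ D) x = (F \_ D') x.
  move=> xp; rewrite /patch.
  have -> : (x \in D) = (x \in D') by apply/idP/idP; rewrite !in_setE => /(DD x xp).
  by [].
congr (_ - _); apply/eqP; rewrite eq_le; apply/andP; split; apply: (nnI_pt p);
  try (by move=> x; exact: funepos_ge0); try (by move=> x; exact: funeneg_ge0);
  move=> x xp /=; rewrite ?funeposE ?funenegE ?(E x xp) //.
Qed.

Lemma mulcB (c : R) (x y : \bar R) : (0 < c)%R ->
  c%:E * x - c%:E * y = c%:E * (x - y).
Proof.
move=> c0; have sg : Num.sg c = 1%R by rewrite gtr0_sg.
case: x => [x| |]; case: y => [y| |] //=.
all: try by rewrite -!EFinD -!EFinM mulrDr mulrN.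
all: rewrite /= ?(gt0_muley (x:=c%:E)) ?(gt0_muleNy (x:=c%:E)) ?lte_fin //=.
Qed.


Lemma nnI_scale_le (c : R) (G : measurableTypeR R -> \bar R) : (0 < c)%R ->
  nnI (fun x => c%:E * G x) <= c%:E * nnI G.
Proof.
move=> c0; apply: ge_ereal_sup => _ [h hG <-].
have ci0 : (0 <= c^-1)%R by rewrite invr_ge0 ltW.
pose h' := scale_nnsfun h ci0.
have -> : sintegral mu h = c%:E * sintegral mu h'.
  rewrite /h' /scale_nnsfun /= sintegralrM muleA -EFinM mulfV ?gt_eqF // mul1e.
  by [].
apply: lee_wpmul2l; first by rewrite lee_fin ltW.
apply: ereal_sup_ubound; exists h' => // x /=.
have := hG x; move: (G x) => g hx.
rewrite -(@lee_pmul2l _ c%:E) ?lte_fin // EFinM muleA -EFinM mulfV ?gt_eqF // mul1r.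
exact: hx.
Qed.

Lemma nnI_scale (c : R) (G : measurableTypeR R -> \bar R) : (0 < c)%R ->
  nnI (fun x => c%:E * G x) = c%:E * nnI G.
Proof.
move=> c0; apply/eqP; rewrite eq_le nnI_scale_le //=.
have ci0 : (0 < c^-1)%R by rewrite invr_gt0.
have := @nnI_scale_le (c^-1) (fun x => c%:E * G x) ci0.
have -> : (fun x => (c^-1)%:E * (c%:E * G x)) = G.
  by apply/funext => x; rewrite muleA -EFinM mulVf ?gt_eqF // mul1e.
move=> /(lee_wpmul2l (x := c%:E)); rewrite lee_fin ltW // => /(_ isT).
by rewrite muleA -EFinM mulfV ?gt_eqF // mul1e.
Qed.

Lemma int_scale (c : R) (D : set R) (F : R -> \bar R) : (0 < c)%R ->
  \int[mu]_(x in D) (c%:E * F x) = c%:E * \int[mu]_(x in D) F x.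
Proof.
move=> c0; rewrite !integral_nnIE.
have fc : c%:E \is a fin_num by [].
have c0' : 0 <= c%:E by rewrite lee_fin ltW.
have Ep : ((fun x => c%:E * F x) \_ D)^\+ = fun x => c%:E * ((F \_ D)^\+ x).
  apply/funext => x; rewrite !funeposE /patch maxe_pMr // mule0.
  by case: ifP => _ //; rewrite mule0.
have En : ((fun x => c%:E * F x) \_ D)^\- = fun x => c%:E * ((F \_ D)^\- x).
  apply/funext => x; rewrite !funenegE /patch maxe_pMr // mule0.
  by case: ifP => _; rewrite ?muleN // mule0.
by rewrite Ep En !nnI_scale // mulcB.
Qed.
End nnI.


Lemma poi_mean (R : realType) (lam : R) :
  (fun m => \sum_(1 <= n < m) (n%:R * Poi lam n)) @ \oo --> lam.
Proof.
have E m : \sum_(1 <= n < m.+1) (n%:R * Poi lam n) =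
    lam * expR (- lam) * series (exp_coeff lam) m.
  rewrite big_add1 /= /series /= big_distrr /=.
  apply: eq_bigr => n _; rewrite /Poi exp_coeffE /= factS natrM exprS.
  field; by rewrite nat1r !pnatr_eq0 -!lt0n fact_gt0.
have H := cvgMl_tmp (a := lam * expR (- lam)) (is_cvg_series_exp_coeff lam).
have L : lam * expR (- lam) * limn (series (exp_coeff lam)) = lam.
  by rewrite -/(expR lam) -mulrA -expRD addNr expR0 mulr1.
rewrite L in H.
rewrite -cvg_shiftS.
under eq_fun do rewrite E.
exact: H.
Qed.

Lemma eseries_poi (R : realType) (lam : R) (I : \bar R) : 0 < lam ->
  (\sum_(1 <= n <oo) ((n%:R * Poi lam n)%:E * I) = lam%:E * I)%E.
Proof.
move=> lam0.
have P0 n : 0 <= Poi lam n.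
  by rewrite /Poi mulr_ge0 ?invr_ge0 // mulr_ge0 ?expR_ge0 // exprn_ge0 // ltW.
apply/cvg_lim => //.
have Hp m : (\sum_(1 <= n < m) ((n%:R * Poi lam n)%:E * I) =
    (\sum_(1 <= n < m) (n%:R * Poi lam n))%:E * I)%E.
  rewrite -sumEFin ge0_sume_distrl // => n _.
  by rewrite lee_fin mulr_ge0.
under eq_fun do rewrite Hp.
have md : (lam%:E *? I)%E.
  case: I {Hp} => [r| |] //; rewrite /mule_def /= ?gt_eqF //.
apply: cvgeM => //.
apply: cvg_EFin; first exact: nearW.
exact: poi_mean.
exact: cvg_cst.
Qed.


Lemma K_eq (R : realType) (t : R) (F : R -> \bar R) : 0 <= t ->
  (\int[@lebesgue_measure R]_(u in [set u : R | (0 < u <= t)%R]) F (t - u)%R =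
   \int[@lebesgue_measure R]_(x in [set x : R | (0 <= x <= t)%R]) F x)%E.
Proof.
move=> t0; rewrite int_refl; apply: (@int_pt R t) => x xt /=.
have xt' : x != t := xt.
split => /andP[h1 h2]; apply/andP; split.
- lra.
- lra.
- lra.
- have : x < t by rewrite lt_neqAle xt' h2.
  lra.
Qed.

Lemma main_gen (R : realType) (off : R -> nat -> R) (N : nat) (Theta s : R)
    (f : R -> R) (k : nat) (h : R -> R) (tau : R) :
  0 < Theta -> 0 <= tau -> h 0 = 0 ->
  moment_sum off N Theta s f k h tau =
  (Theta%:E * \int[@lebesgue_measure R]_(alpha in [set alpha : R | (0 < alpha)%R])
     ((alpha ^+ k * f alpha)%:E *
      \int[@lebesgue_measure R]_(t in [set t : R | (0 <= t <= tau)%R])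
        ((1 - Plost off (ipart t) (expR (s * alpha)))%:E *
         \int[@lebesgue_measure R]_(x in [set x : R | (0 <= x < 1)%R])
            (h x * g (aa off t (expR (s * alpha)) N) x)%:E)))%E.
Proof.
move=> Th0 tau0 h0.
set F := fun alpha t => ((1 - Plost off (ipart t) (expR (s * alpha)))%:E *
         \int[@lebesgue_measure R]_(x in [set x : R | (0 <= x < 1)%R])
            (h x * g (aa off t (expR (s * alpha)) N) x)%:E)%E.
have K alpha : (\int[@lebesgue_measure R]_(u in [set u : R | (0 < u <= tau)%R])
     EhX_given off N h tau (expR (s * alpha)) u =
    \int[@lebesgue_measure R]_(t in [set t : R | (0 <= t <= tau)%R]) F alpha t)%E.
  rewrite -K_eq //; apply: eq_integral => u _.
  by rewrite /EhX_given /F h0 mulr0 add0e.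
move: tau0; rewrite le_eqVlt => /predU1P[tau0|tau0].
  subst tau.
  have Z alpha : (\int[@lebesgue_measure R]_(t in [set t : R | (0 <= t <= 0)%R]) F alpha t = 0)%E.
    rewrite -K_eq // (_ : [set u : R | (0 < u <= 0)%R] = set0) ?integral_set0 //.
    by apply/seteqP; split => u //= /andP[] /lt_le_trans h1 /h1; rewrite ltxx.
  rewrite /moment_sum eseries0; last first.
    move=> n n1 _; rewrite /Poi mulr0 expr0n.
    by case: n n1 => // n _; rewrite /= mulr0 mul0r mul0e.
  under eq_integral do rewrite Z mule0.
  by rewrite integral0 mule0.
set I := (\int[@lebesgue_measure R]_(alpha in [set alpha : R | (0 < alpha)%R])
     ((alpha ^+ k)%:E * EhX off N h tau (expR (s * alpha)) * (f alpha)%:E))%E.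
have E n : ((Poi (Theta * tau) n)%:E * \sum_(i < n) I =
    (n%:R * Poi (Theta * tau) n)%:E * I)%E.
  rewrite sumr_const card_ord.
  have -> : (I *+ n)%R = ((n%:R)%:E * I)%E by rewrite mule_natl.
  by rewrite muleA -EFinM mulrC.
rewrite /moment_sum -/I.
under eq_eseriesr do rewrite E.
rewrite eseries_poi ?mulr_gt0 //.
have tinv : 0 < tau^-1 by rewrite invr_gt0.
have -> : I = ((tau^-1)%:E * \int[@lebesgue_measure R]_(alpha in [set alpha : R | (0 < alpha)%R])
     ((alpha ^+ k * f alpha)%:E *
      \int[@lebesgue_measure R]_(t in [set t : R | (0 <= t <= tau)%R]) F alpha t))%E.
  rewrite -int_scale // /I; apply: eq_integral => alpha _.
  rewrite /EhX K EFinM.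
  by rewrite muleCA -muleA muleAC.
by rewrite muleA -EFinM mulfK ?gt_eqF.
Qed.

Theorem mainTheorem1 (R : realType) (N : nat) (Theta s : R) (f : R -> R)
    (off : R -> nat -> R) :
  (0 < N)%N -> 0 < Theta -> 0 < s ->
  (* f is a probability density on (0, oo) with finite moments *)
  (forall alpha, 0 < alpha -> 0 <= f alpha) ->
  measurable_fun [set alpha : R | (0 < alpha)%R] f ->
  (\int[@lebesgue_measure R]_(alpha in [set alpha : R | (0 < alpha)%R]) (f alpha)%:E
     = 1)%E ->
  (forall k : nat,
     (\int[@lebesgue_measure R]_(alpha in [set alpha : R | (0 < alpha)%R])
        (alpha ^+ k * f alpha)%:E < +oo)%E) ->
  (* Galton-Watson offspring laws: off sigma has mean sigma (sigma > 1),
     depending measurably on sigma *)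
  (forall sigma, 1 < sigma -> offspring_law (off sigma) sigma) ->
  (forall k, measurable_fun [set sigma : R | 1 < sigma] (fun sigma => off sigma k)) ->
  forall tau : R, 0 <= tau ->
    Gbar off N Theta s f tau =
      (Theta%:E *
       \int[@lebesgue_measure R]_(alpha in [set alpha : R | (0 < alpha)%R])
         ((alpha * f alpha)%:E *
          \int[@lebesgue_measure R]_(t in [set t : R | (0 <= t <= tau)%R])
            ((1 - Plost off (ipart t) (expR (s * alpha)))%:E *
             gamma1 (aa off t (expR (s * alpha)) N))))%E
    /\
    VG off N Theta s f tau =
      (Theta%:E *
       \int[@lebesgue_measure R]_(alpha in [set alpha : R | (0 < alpha)%R])
         ((alpha ^+ 2 * f alpha)%:E *
          \int[@lebesgue_measure R]_(t in [set t : R | (0 <= t <= tau)%R])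
            ((1 - Plost off (ipart t) (expR (s * alpha)))%:E *
             gamma (aa off t (expR (s * alpha)) N))))%E.
Proof.
move=> N0 Th0 s0 _ _ _ _ _ _ tau tau0; split.
- by rewrite /Gbar main_gen.

- by rewrite /VG main_gen // mul0r.
Qed.
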